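(* For $f,g\in\mathbb Z^{m+\infty}_+$, $f\ge g$ in the Bruhat ordering if and only if $f^\natural\succcurlyeq g^\natural$ in the super Bruhat ordering.
   Context: $I(m|\infty)=\{-m,\dots,-1\}\cup\{1,2,\dots\}$. $\mathbb Z^{m+\infty}_+$ is the set of $f:I(m|\infty)\to\mathbb Z$ with $f(-m)>\cdots>f(-1)$, $f(1)>f(2)>\cdots$, $f(i)=1-i$ for $i\gg0$; $\mathbb Z^{m|\infty}_+$ the set with $f(-m)>\cdots>f(-1)$, $f(1)<f(2)<\cdots$, $f(i)=i$ for $i\gg0$. For $f\in\mathbb Z^{m+\infty}_+$, $f^\natural\in\mathbb Z^{m|\infty}_+$ has $f^\natural(i)=f(i)$ for $i<0$, and $(f^\natural(1)<f^\natural(2)<\cdots)$ is the increasing enumeration of $\mathbb Z\setminus\{f(1),f(2),\dots\}$. Bruhat ordering: transitive closure of $f<f\cdot\tau_{ij}$ for $i<j$ in $I(m|\infty)$ with $f(i)<f(j)$, where $\tau_{ij}$ is the transposition and $(f\cdot\tau)(k)=f(\tau(k))$. Super Bruhat ordering: with $d_i:j\mapsto-\mathrm{sgn}(i)\delta_{ij}$, write $f\downarrow g$ if $g=f-d_i+d_j$ for some $i<0<j$ with $f(i)=f(j)$, or $g=f\cdot\tau_{ij}$ for some $i<j<0$ with $f(i)>f(j)$, or $g=f\cdot\tau_{ij}$ for some $0<i<j$ with $f(i)<f(j)$; $f\succ g$ means there is a chain $f=h_1\downarrow h_2\downarrow\cdots\downarrow h_r=g$, and $\succcurlyeq$ means $\succ$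 or $=$. *)

(* Defs.v *)
(* integers Z, functions I(m|oo) -> Z represented as Z -> Z,
   only their values on I(m|oo) matter (all relations compare on I). *)
From Stdlib Require Import ZArith Relations ClassicalEpsilon.
Open Scope Z_scope.

Definition inI (m : nat) (i : Z) : Prop :=
  (- Z.of_nat m <= i <= -1) \/ 1 <= i.

Definition eqI (m : nat) (f g : Z -> Z) : Prop :=
  forall k, inI m k -> f k = g k.

Definition in_plus (m : nat) (f : Z -> Z) : Prop :=
  (forall i, - Z.of_nat m <= i < -1 -> f i > f (i + 1)) /\
  (forall i, 1 <= i -> f i > f (i + 1)) /\
  (exists N, forall i, N <= i -> f i = 1 - i).

Definition in_super (m : nat) (f : Z -> Z) : Prop :=
  (forall i, - Z.of_nat m <= i < -1 -> f i > f (i + 1)) /\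
  (forall i, 1 <= i -> f i < f (i + 1)) /\
  (exists N, forall i, N <= i -> f i = i).

Definition is_natural (m : nat) (f h : Z -> Z) : Prop :=
  (forall i, - Z.of_nat m <= i <= -1 -> h i = f i) /\
  (forall i, 1 <= i -> h i < h (i + 1)) /\
  (forall x, (exists j, 1 <= j /\ h j = x) <-> ~ (exists j, 1 <= j /\ f j = x)).

Definition natural (m : nat) (f : Z -> Z) : Z -> Z :=
  epsilon (inhabits (fun _ : Z => 0)) (is_natural m f).

Definition tau (i j k : Z) : Z :=
  if Z.eqb k i then j else if Z.eqb k j then i else k.
Definition act (f : Z -> Z) (i j : Z) : Z -> Z := fun k => f (tau i j k).

Definition bruhat_step (m : nat) (f f' : Z -> Z) : Prop :=
  exists i j, inI m i /\ inI m j /\ i < j /\ f i < f j /\ eqI m f' (act f i j).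

Definition bruhat_le (m : nat) (g f : Z -> Z) : Prop :=
  eqI m g f \/ clos_trans (Z -> Z) (bruhat_step m) g f.

Definition d (i : Z) : Z -> Z := fun j => if Z.eqb i j then - Z.sgn i else 0.

Definition super_down (m : nat) (f g : Z -> Z) : Prop :=
  (exists i j, inI m i /\ inI m j /\ i < 0 < j /\ f i = f j /\
      eqI m g (fun k => f k - d i k + d j k)) \/
  (exists i j, inI m i /\ inI m j /\ i < j < 0 /\ f i > f j /\ eqI m g (act f i j)) \/
  (exists i j, inI m i /\ inI m j /\ 0 < i < j /\ f i < f j /\ eqI m g (act f i j)).

Definition super_gt (m : nat) (f g : Z -> Z) : Prop :=
  clos_trans (Z -> Z) (super_down m) f g.

Definition super_ge (m : nat) (f g : Z -> Z) : Prop :=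
  super_gt m f g \/ eqI m f g.

(* Main.v *)
Require Import Defs.
From Stdlib Require Import ZArith.
From Stdlib Require Import Lia Relations FunctionalExtensionality Classical ClassicalEpsilon Bool.
Open Scope Z_scope.


Ltac zd := repeat match goal with
 | |- context [Z.eqb ?a ?b] => destruct (Z.eqb_spec a b)
 | |- context [Z.ltb ?a ?b] => destruct (Z.ltb_spec a b)
 | |- context [Z.leb ?a ?b] => destruct (Z.leb_spec a b)
 end.

Lemma Zmin_ex (P : Z -> Prop) (lo x : Z) : lo <= x -> P x ->
  exists y, lo <= y <= x /\ P y /\ forall z, lo <= z < y -> ~ P z.
Proof.
  intros Hx HP.
  remember (Z.to_nat (x - lo)) as n eqn:En.
  revert x Hx HP En. induction n as [n IH] using lt_wf_ind. intros x Hx HP En.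
  destruct (classic (exists z, lo <= z < x /\ P z)) as [[z [Hz Pz]]|Hno].
  - destruct (IH (Z.to_nat (z - lo))) with (x := z) as [y [Hy1 [Hy2 Hy3]]]; try lia; auto.
    exists y; repeat split; auto; lia.
  - exists x. split; [lia|split; auto]. intros z Hz Pz. apply Hno. exists z; split; auto; lia.
Qed.

Lemma Zmax_ex (P : Z -> Prop) (hi x : Z) : x <= hi -> P x ->
  exists y, x <= y <= hi /\ P y /\ forall z, y < z <= hi -> ~ P z.
Proof.
  intros Hx HP. destruct (Zmin_ex (fun z => P (-z)) (-hi) (-x)) as [y [Hy [Py Hz]]]; try lia.
  - rewrite Z.opp_involutive; auto.
  - exists (-y). split; [lia|split; auto]. intros z Hz' Pz. apply (Hz (-z)); [lia| rewrite Z.opp_involutive; auto].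
Qed.

Lemma dec_mono (f : Z -> Z) lo hi : (forall i, lo <= i -> i < hi -> f i > f (i+1)) ->
  forall i j, lo <= i -> i < j -> j <= hi -> f i > f j.
Proof.
  intros H i j Hi Hij Hj.
  remember (Z.to_nat (j - i - 1)) as n eqn:En. revert j Hij Hj En.
  induction n; intros j Hij Hj En.
  - assert (j = i + 1) by lia. subst. apply H; lia.
  - assert (f i > f (j - 1)) by (apply IHn; lia).
    assert (f (j-1) > f (j - 1 + 1)) by (apply H; lia).
    replace (j - 1 + 1) with j in * by lia. lia.
Qed.

Lemma inc_mono (f : Z -> Z) lo hi : (forall i, lo <= i -> i < hi -> f i < f (i+1)) ->
  forall i j, lo <= i -> i < j -> j <= hi -> f i < f j.
Proof.
  intros H. pose proof (dec_mono (fun k => - f k) lo hi) as D.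
  intros i j Hi Hij Hj. assert (- f i > - f j); [apply D; auto; intros; specialize (H i0); lia| lia].
Qed.

Lemma eqI_refl m f : eqI m f f. Proof. intros k _; auto. Qed.
Lemma eqI_sym m f g : eqI m f g -> eqI m g f. Proof. intros H k Hk; symmetry; auto. Qed.
Lemma eqI_trans m f g h : eqI m f g -> eqI m g h -> eqI m f h.
Proof. intros H1 H2 k Hk; rewrite H1, H2; auto. Qed.

Lemma tau_inI m i j k : inI m i -> inI m j -> inI m k -> inI m (tau i j k).
Proof. intros. unfold tau. zd; auto. Qed.

Lemma act_eqI m h h2 i j : eqI m h h2 -> inI m i -> inI m j -> eqI m (act h i j) (act h2 i j).
Proof. intros H Hi Hj k Hk. unfold act. apply H. apply tau_inI; auto. Qed.

Lemma bstep_eqI_l m h1 h2 h3 : eqI m h1 h2 -> bruhat_step m h2 h3 -> bruhat_step m h1 h3.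
Proof.
  intros E [i [j [Hi [Hj [Hij [Hv He]]]]]]. exists i, j. rewrite (E i Hi), (E j Hj).
  repeat split; auto. eapply eqI_trans; [exact He|]. apply act_eqI; auto. apply eqI_sym; auto.
Qed.

Lemma bstep_eqI_r m h1 h2 h3 : bruhat_step m h1 h2 -> eqI m h2 h3 -> bruhat_step m h1 h3.
Proof.
  intros [i [j [Hi [Hj [Hij [Hv He]]]]]] E. exists i, j. repeat split; auto.
  eapply eqI_trans; [apply eqI_sym; exact E|exact He].
Qed.

Lemma sdown_eqI_l m h1 h2 h3 : eqI m h1 h2 -> super_down m h2 h3 -> super_down m h1 h3.
Proof.
  intros E [[i [j [Hi [Hj [Hij [Hv He]]]]]]|[[i [j [Hi [Hj [Hij [Hv He]]]]]]|[i [j [Hi [Hj [Hij [Hv He]]]]]]]].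
  - left. exists i, j. rewrite (E i Hi), (E j Hj). refine (conj Hi (conj Hj (conj Hij (conj Hv _)))).
    intros k Hk. rewrite He by auto. rewrite (E k Hk). auto.
  - right; left. exists i, j. rewrite (E i Hi), (E j Hj). refine (conj Hi (conj Hj (conj Hij (conj Hv _)))).
    eapply eqI_trans; [exact He|]. apply act_eqI; auto. apply eqI_sym; auto.
  - right; right. exists i, j. rewrite (E i Hi), (E j Hj). refine (conj Hi (conj Hj (conj Hij (conj Hv _)))).
    eapply eqI_trans; [exact He|]. apply act_eqI; auto. apply eqI_sym; auto.
Qed.

Lemma sdown_eqI_r m h1 h2 h3 : super_down m h1 h2 -> eqI m h2 h3 -> super_down m h1 h3.
Proof.
  intros [[i [j [Hi [Hj [Hij [Hv He]]]]]]|[[i [j [Hi [Hj [Hij [Hv He]]]]]]|[i [j [Hi [Hj [Hij [Hv He]]]]]]]] E.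
  - left. exists i, j. refine (conj Hi (conj Hj (conj Hij (conj Hv _)))). eapply eqI_trans; [apply eqI_sym; exact E|exact He].
  - right; left. exists i, j. refine (conj Hi (conj Hj (conj Hij (conj Hv _)))). eapply eqI_trans; [apply eqI_sym; exact E|exact He].
  - right; right. exists i, j. refine (conj Hi (conj Hj (conj Hij (conj Hv _)))). eapply eqI_trans; [apply eqI_sym; exact E|exact He].
Qed.

Lemma ct_eqI_l (R : (Z->Z) -> (Z->Z) -> Prop) m :
  (forall a b c, eqI m a b -> R b c -> R a c) ->
  forall a b c, eqI m a b -> clos_trans _ R b c -> clos_trans _ R a c.
Proof.
  intros HR a b c E H. revert a E. induction H; intros a E.
  - apply t_step. eauto.
  - eapply t_trans; [apply IHclos_trans1; eauto| exact H0].
Qed.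

Lemma ct_eqI_r (R : (Z->Z) -> (Z->Z) -> Prop) m :
  (forall a b c, R a b -> eqI m b c -> R a c) ->
  forall a b c, clos_trans _ R a b -> eqI m b c -> clos_trans _ R a c.
Proof.
  intros HR a b c H. revert c. induction H; intros c E.
  - apply t_step. eauto.
  - eapply t_trans; [exact H| apply IHclos_trans2; eauto].
Qed.

Lemma rt_cases (R : (Z->Z) -> (Z->Z) -> Prop) a b :
  clos_refl_trans _ R a b -> a = b \/ clos_trans _ R a b.
Proof.
  induction 1.
  - right; apply t_step; auto.
  - left; auto.
  - destruct IHclos_refl_trans1 as [->|H1]; destruct IHclos_refl_trans2 as [->|H2]; auto.
    right; eapply t_trans; eauto.
Qed.

Lemma bruhat_compose m g f' f :
  bruhat_le m g f' -> clos_refl_trans _ (bruhat_step m) f' f -> bruhat_le m g f.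
Proof.
  intros [E|C] H; destruct (rt_cases _ _ _ H) as [->|C2].
  - left; auto.
  - right. eapply ct_eqI_l; eauto. intros; eapply bstep_eqI_l; eauto.
  - right; auto.
  - right; eapply t_trans; eauto.
Qed.

Lemma super_compose m A B B' C :
  clos_refl_trans _ (super_down m) A B -> eqI m B B' -> super_ge m B' C -> super_ge m A C.
Proof.
  intros H E [G|E2]; destruct (rt_cases _ _ _ H) as [->|C1].
  - left. eapply ct_eqI_l; eauto. intros; eapply sdown_eqI_l; eauto.
  - left. eapply t_trans; [exact C1|]. eapply ct_eqI_l; eauto. intros; eapply sdown_eqI_l; eauto.
  - right. eapply eqI_trans; eauto.
  - left. eapply ct_eqI_r; eauto. intros; eapply sdown_eqI_r; eauto. eapply eqI_trans; eauto.
Qed.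


Fixpoint cnt (P : Z -> bool) (h : Z -> Z) (lo : Z) (n : nat) : Z :=
  match n with O => 0 | S n' => cnt P h lo n' + (if P (h (lo + Z.of_nat n')) then 1 else 0) end.

Definition upd (h : Z -> Z) (i v : Z) : Z -> Z := fun k => if k =? i then v else h k.

Lemma cnt_ext P h h' lo n : (forall k, lo <= k < lo + Z.of_nat n -> h k = h' k) ->
  cnt P h lo n = cnt P h' lo n.
Proof.
  induction n; simpl; intros H; auto. rewrite IHn by (intros; apply H; lia).
  rewrite H by lia. auto.
Qed.

Lemma cnt_bounds P h lo n : 0 <= cnt P h lo n <= Z.of_nat n.
Proof. induction n; simpl; [lia|]. destruct (P _); lia. Qed.

Lemma cnt_all P h lo n : (forall k, lo <= k < lo + Z.of_nat n -> P (h k) = true) ->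
  cnt P h lo n = Z.of_nat n.
Proof.
  induction n; simpl; intros H; auto. rewrite IHn by (intros; apply H; lia).
  rewrite H by lia. lia.
Qed.

Lemma cnt_none P h lo n : (forall k, lo <= k < lo + Z.of_nat n -> P (h k) = false) ->
  cnt P h lo n = 0.
Proof.
  induction n; simpl; intros H; auto. rewrite IHn by (intros; apply H; lia).
  rewrite H by lia. lia.
Qed.

Lemma cnt_split P h lo a b : cnt P h lo (a + b) = cnt P h lo a + cnt P h (lo + Z.of_nat a) b.
Proof.
  induction b; simpl. - rewrite Nat.add_0_r. lia.
  - rewrite Nat.add_succ_r. simpl. rewrite IHb.
    replace (lo + Z.of_nat (a + b)) with (lo + Z.of_nat a + Z.of_nat b) by lia. lia.
Qed.

Lemma cnt_upd_in P h lo n i v : lo <= i < lo + Z.of_nat n ->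
  cnt P (upd h i v) lo n = cnt P h lo n + (if P v then 1 else 0) - (if P (h i) then 1 else 0).
Proof.
  induction n; simpl; intros H; [lia|].
  unfold upd at 2. destruct (Z.eqb_spec (lo + Z.of_nat n) i).
  - rewrite (cnt_ext P (upd h i v) h) by (intros; unfold upd; zd; lia). subst i. lia.
  - rewrite IHn by lia. lia.
Qed.

Lemma cnt_upd_out P h lo n i v : ~ (lo <= i < lo + Z.of_nat n) ->
  cnt P (upd h i v) lo n = cnt P h lo n.
Proof. intros H. apply cnt_ext. intros k Hk. unfold upd. zd; lia. Qed.

Lemma act_upd h i j : i <> j -> act h i j = upd (upd h i (h j)) j (h i).
Proof. intros. apply functional_extensionality. intros k. unfold act, upd, tau. zd; subst; auto; lia. Qed.

Lemma upd_at h i v : upd h i v i = v.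
Proof. unfold upd. rewrite Z.eqb_refl. auto. Qed.
Lemma upd_ne h i v k : k <> i -> upd h i v k = h k.
Proof. unfold upd. intros. zd; lia. Qed.

Definition ind (P : Prop) : Z := if excluded_middle_informative P then 1 else 0.
Lemma ind_t (P : Prop) : P -> ind P = 1. Proof. unfold ind; destruct excluded_middle_informative; tauto. Qed.
Lemma ind_f (P : Prop) : ~P -> ind P = 0. Proof. unfold ind; destruct excluded_middle_informative; tauto. Qed.
Lemma ind_iff (P Q : Prop) : (P <-> Q) -> ind P = ind Q.
Proof. intros H. unfold ind; do 2 destruct excluded_middle_informative; tauto. Qed.
Lemma ind_01 (P : Prop) : ind P = 0 /\ ~P \/ ind P = 1 /\ P.
Proof. unfold ind; destruct excluded_middle_informative; tauto. Qed.

Lemma cnt_eq_ind h lo n x (P : Prop) :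
  (forall k l, lo <= k < lo + Z.of_nat n -> lo <= l < lo + Z.of_nat n -> h k = h l -> k = l) ->
  (P <-> exists k, lo <= k < lo + Z.of_nat n /\ h k = x) ->
  cnt (fun y => y =? x) h lo n = ind P.
Proof.
  intros Hinj HP. destruct (classic P) as [p|np].
  - rewrite ind_t by auto. destruct (proj1 HP p) as [k [Hk Hx]].
    replace n with (Z.to_nat (k - lo) + (1 + (n - Z.to_nat (k - lo) - 1)))%nat by lia.
    rewrite !cnt_split. simpl.
    rewrite !cnt_none.
    + replace (lo + Z.of_nat (Z.to_nat (k - lo)) + 0) with k by lia. rewrite Hx, Z.eqb_refl. lia.
    + intros l Hl. destruct (Z.eqb_spec (h l) x); auto. exfalso.
      assert (l = k) by (apply Hinj; lia). lia.
    + intros l Hl. destruct (Z.eqb_spec (h l) x); auto. exfalso.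
      assert (l = k) by (apply Hinj; lia). lia.
  - rewrite ind_f by auto. apply cnt_none. intros k Hk. destruct (Z.eqb_spec (h k) x); auto.
    exfalso. apply np, HP. eauto.
Qed.

Definition sumZ (F : Z -> Z) (lo : Z) (n : nat) : Z :=
  cnt (fun _ => true) (fun _ => 0) 0 0 + (fix s (n : nat) : Z := match n with O => 0 | S n' => s n' + F (lo + Z.of_nat n') end) n.

Lemma sum_le_lt F G lo n : (forall k, lo <= k < lo + Z.of_nat n -> F k <= G k) ->
  (exists k, lo <= k < lo + Z.of_nat n /\ F k < G k) -> sumZ F lo n < sumZ G lo n.
Proof.
  unfold sumZ. simpl. induction n; intros H [k [Hk Hlt]]; simpl in *; [lia|].
  destruct (Z.eq_dec k (lo + Z.of_nat n)).
  - subst. assert (forall n', (n' <= n)%nat -> (fix s (n : nat) : Z := match n with | 0%nat => 0 | S n' => s n' + F (lo + Z.of_nat n') end) n' <= (fix s (n : nat) : Z := match n with | 0%nat => 0 | S n' => s n' + G (lo + Z.of_nat n') end) n').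
    { induction n'; intros; simpl; [lia|]. specialize (IHn' ltac:(lia)). specialize (H (lo + Z.of_nat n') ltac:(lia)). lia. }
    specialize (H0 n (le_n _)). lia.
  - specialize (IHn ltac:(intros; apply H; lia) ltac:(exists k; split; [lia|auto])).
    specialize (H (lo + Z.of_nat n) ltac:(lia)). lia.
Qed.


Lemma sum_le F G lo n : (forall k, lo <= k < lo + Z.of_nat n -> F k <= G k) -> sumZ F lo n <= sumZ G lo n.
Proof.
  unfold sumZ. simpl. induction n; intros H; simpl in *; [lia|].
  specialize (IHn ltac:(intros; apply H; lia)). specialize (H (lo + Z.of_nat n) ltac:(lia)). lia.
Qed.

Definition eqb' x := fun y => y =? x.
Definition geb' x := fun y => x <=? y.
Definition TC m h W x := cnt (eqb' x) h (- Z.of_nat m) m + cnt (eqb' x) h 1 W.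
Definition SC m h W x := cnt (eqb' x) h (- Z.of_nat m) m - cnt (eqb' x) h 1 W.
Definition NG m h x := cnt (geb' x) h (- Z.of_nat m) m.

Ltac cupd := repeat match goal with |- context [cnt ?P (upd ?h ?i ?v) ?lo ?n] =>
  let H := fresh in destruct (classic (lo <= i < lo + Z.of_nat n)) as [H|H];
  [rewrite (cnt_upd_in P h lo n i v H)|rewrite (cnt_upd_out P h lo n i v H)] end.

Lemma cnt_eqI m P h h' W : eqI m h h' ->
  cnt P h (- Z.of_nat m) m = cnt P h' (- Z.of_nat m) m /\ cnt P h 1 W = cnt P h' 1 W.
Proof. intros E. split; apply cnt_ext; intros k Hk; apply E; unfold inI; lia. Qed.

Lemma bstep_inv m h h' : bruhat_step m h h' ->
  (exists W0, forall W, (W0 <= W)%nat -> forall x, TC m h' W x = TC m h W x) /\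
  (forall x, NG m h x <= NG m h' x).
Proof.
  intros [i [j [Hi [Hj [Hij [Hv He]]]]]].
  assert (Hne : i <> j) by lia.
  split.
  - exists (Z.to_nat j). intros W HW x. unfold TC.
    destruct (cnt_eqI m (eqb' x) _ _ W He) as [-> ->].
    rewrite act_upd by auto. cupd; rewrite ?upd_ne by lia; unfold inI in *; lia.
  - intros x. unfold NG. destruct (cnt_eqI m (geb' x) _ _ 0 He) as [-> _].
    rewrite act_upd by auto. cupd; rewrite ?upd_ne by lia; unfold inI in *; try lia.
    unfold geb'. destruct (Z.leb_spec x (h i)); destruct (Z.leb_spec x (h j)); lia.
Qed.

Lemma bruhat_inv m g f : bruhat_le m g f ->
  (exists W0, forall W, (W0 <= W)%nat -> forall x, TC m g W x = TC m f W x) /\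
  (forall x, NG m g x <= NG m f x).
Proof.
  intros [E|C].
  - split. + exists O. intros W _ x. unfold TC. destruct (cnt_eqI m (eqb' x) _ _ W E) as [-> ->]. auto.
    + intros x. unfold NG. destruct (cnt_eqI m (geb' x) _ _ 0 E) as [-> _]. lia.
  - induction C as [a b S|a b c C1 IH1 C2 IH2].
    + destruct (bstep_inv m a b S) as [[W0 H1] H2]. split; [exists W0; intros; rewrite H1; auto|intros; apply H2].
    + destruct IH1 as [[W1 A1] B1]. destruct IH2 as [[W2 A2] B2]. split.
      * exists (Nat.max W1 W2). intros W HW x. rewrite A1, A2; auto; lia.
      * intros x. specialize (B1 x). specialize (B2 x). lia.
Qed.

Lemma d_neg i k : i < 0 -> d i k = if i =? k then 1 else 0.
Proof. intros. unfold d. zd; auto. rewrite Z.sgn_neg by lia. lia. Qed.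
Lemma d_pos i k : 0 < i -> d i k = if i =? k then -1 else 0.
Proof. intros. unfold d. zd; auto. rewrite Z.sgn_pos by lia. lia. Qed.

Lemma sstep_inv m h h' : super_down m h h' ->
  (exists W0, forall W, (W0 <= W)%nat -> forall x, SC m h' W x = SC m h W x) /\
  (forall x, NG m h' x <= NG m h x).
Proof.
  intros [[i [j [Hi [Hj [Hij [Hv He]]]]]]|[[i [j [Hi [Hj [Hij [Hv He]]]]]]|[i [j [Hi [Hj [Hij [Hv He]]]]]]]].
  - assert (Heq : (fun k => h k - d i k + d j k) = upd (upd h i (h i - 1)) j (h j - 1)).
    { apply functional_extensionality; intros k. rewrite d_neg, d_pos by lia. unfold upd. zd; subst; lia. }
    rewrite Heq in He. split.
    + exists (Z.to_nat j). intros W HW x. unfold SC.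
      destruct (cnt_eqI m (eqb' x) _ _ W He) as [-> ->].
      cupd; rewrite ?upd_ne by lia; unfold inI in *; try lia.
      rewrite Hv. lia.
    + intros x. unfold NG. destruct (cnt_eqI m (geb' x) _ _ 0 He) as [-> _].
      cupd; rewrite ?upd_ne by lia; unfold inI in *; try lia.
      unfold geb'. destruct (Z.leb_spec x (h i)); destruct (Z.leb_spec x (h i - 1)); lia.
  - assert (Hne : i <> j) by lia. split.
    + exists O. intros W HW x. unfold SC.
      destruct (cnt_eqI m (eqb' x) _ _ W He) as [-> ->].
      rewrite act_upd by auto. cupd; rewrite ?upd_ne by lia; unfold inI in *; lia.
    + intros x. unfold NG. destruct (cnt_eqI m (geb' x) _ _ 0 He) as [-> _].
      rewrite act_upd by auto. cupd; rewrite ?upd_ne by lia; unfold inI in *; lia.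
  - assert (Hne : i <> j) by lia. split.
    + exists (Z.to_nat j). intros W HW x. unfold SC.
      destruct (cnt_eqI m (eqb' x) _ _ W He) as [-> ->].
      rewrite act_upd by auto. cupd; rewrite ?upd_ne by lia; unfold inI in *; lia.
    + intros x. unfold NG. destruct (cnt_eqI m (geb' x) _ _ 0 He) as [-> _].
      rewrite act_upd by auto. cupd; rewrite ?upd_ne by lia; unfold inI in *; lia.
Qed.

Lemma super_inv m f g : super_ge m f g ->
  (exists W0, forall W, (W0 <= W)%nat -> forall x, SC m g W x = SC m f W x) /\
  (forall x, NG m g x <= NG m f x).
Proof.
  intros [C|E].
  - induction C as [a b S|a b c C1 IH1 C2 IH2].
    + destruct (sstep_inv m a b S) as [[W0 H1] H2]. split; [exists W0; intros; rewrite H1; auto|intros; apply H2].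
    + destruct IH1 as [[W1 A1] B1]. destruct IH2 as [[W2 A2] B2]. split.
      * exists (Nat.max W1 W2). intros W HW x. rewrite A2, A1; auto; lia.
      * intros x. specialize (B1 x). specialize (B2 x). lia.
  - split. + exists O. intros W _ x. unfold SC. destruct (cnt_eqI m (eqb' x) _ _ W E) as [-> ->]. auto.
    + intros x. unfold NG. destruct (cnt_eqI m (geb' x) _ _ 0 E) as [-> _]. lia.
Qed.


Definition inA (m : nat) (f : Z -> Z) x := exists k, - Z.of_nat m <= k <= -1 /\ f k = x.
Definition inS (f : Z -> Z) x := exists j, 1 <= j /\ f j = x.

Lemma natural_exists m f : in_plus m f -> exists h, is_natural m f h.
Proof.
  intros [Hn [Hp [N HN]]].
  set (N1 := Z.max N 1). set (L := 1 - N1).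
  assert (low : forall y, y < L -> inS f y).
  { intros y Hy. exists (1 - y). split; [lia|]. rewrite HN by lia. lia. }
  assert (high : forall y, y > f 1 -> ~ inS f y).
  { intros y Hy [j [Hj Hfj]]. destruct (Z.eq_dec j 1); [subst; lia|].
    assert (f 1 > f j) by (apply (dec_mono f 1 j); auto; lia). lia. }
  set (T := fun y => ~ inS f y).
  set (tb := fun y => if excluded_middle_informative (T y) then true else false).
  set (c := fun x => cnt tb (fun y => y) L (Z.to_nat (x - L))).
  assert (c_succ : forall x, x >= L -> c (x+1) = c x + ind (T x)).
  { intros x Hx. unfold c. replace (Z.to_nat (x + 1 - L)) with (S (Z.to_nat (x - L))) by lia.
    simpl. replace (L + Z.of_nat (Z.to_nat (x - L))) with x by lia.
    unfold tb, ind. destruct excluded_middle_informative; lia. }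
  assert (c_low : forall x, x <= L -> c x = 0).
  { intros x Hx. unfold c. replace (Z.to_nat (x - L)) with O by lia. reflexivity. }
  assert (c_step : forall z, c z <= c (z+1) <= c z + 1).
  { intros z. destruct (Z_lt_le_dec z L).
    - rewrite !c_low by lia. lia.
    - rewrite c_succ by lia. destruct (ind_01 (T z)) as [[-> _]|[-> _]]; lia. }
  assert (c_mono : forall x y, x <= y -> c x <= c y).
  { intros x y Hxy. remember (Z.to_nat (y - x)) as n. revert y Hxy Heqn. induction n; intros y Hxy En.
    - replace y with x by lia. lia.
    - specialize (IHn (y - 1) ltac:(lia) ltac:(lia)). specialize (c_step (y-1)).
      replace (y - 1 + 1) with y in c_step by lia. lia. }
  assert (c_nonneg : forall x, 0 <= c x) by (intros; apply cnt_bounds).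
  assert (T_L : forall x, T x -> x >= L) by (intros x Tx; destruct (Z_lt_ge_dec x L); auto; exfalso; apply Tx, low; auto).
  assert (c_strict : forall x y, x < y -> T x -> c x + 1 <= c y).
  { intros x y Hxy Tx. specialize (T_L x Tx). rewrite <- (ind_t (T x)) by auto.
    rewrite <- c_succ by auto. apply c_mono. lia. }
  assert (IVT : forall n x0 k, c x0 <= k < c (x0 + Z.of_nat n) -> exists x, T x /\ c x = k).
  { induction n; intros x0 k Hk.
    - simpl in Hk. rewrite Z.add_0_r in Hk. lia.
    - destruct (Z_le_gt_dec (c (x0 + Z.of_nat n)) k).
      + exists (x0 + Z.of_nat n). specialize (c_step (x0 + Z.of_nat n)).
        replace (x0 + Z.of_nat (S n)) with (x0 + Z.of_nat n + 1) in Hk by lia.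
        assert (E : c (x0 + Z.of_nat n) = k) by lia. split; auto.
        destruct (Z_lt_le_dec (x0 + Z.of_nat n) L).
        * rewrite (c_low (x0 + Z.of_nat n + 1)) in Hk by lia. specialize (c_nonneg x0). lia.
        * rewrite c_succ in Hk by lia. destruct (ind_01 (T (x0 + Z.of_nat n))) as [[? _]|[_ ?]]; auto; lia.
      + apply (IHn x0). lia. }
  set (X0 := Z.max L (f 1 + 1)).
  assert (unb : forall t : nat, Z.of_nat t <= c (X0 + Z.of_nat t)).
  { induction t. - simpl. rewrite Z.add_0_r. apply c_nonneg.
    - replace (X0 + Z.of_nat (S t)) with (X0 + Z.of_nat t + 1) by lia.
      rewrite c_succ by lia. rewrite ind_t; [lia|]. apply high. lia. }
  assert (ex : forall k, 0 <= k -> exists x, T x /\ c x = k).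
  { intros k Hk. apply (IVT (Z.to_nat (X0 + k + 1 - L)) L k).
    rewrite c_low by lia. split; auto.
    replace (L + Z.of_nat (Z.to_nat (X0 + k + 1 - L))) with (X0 + Z.of_nat (Z.to_nat (k+1))) by lia.
    specialize (unb (Z.to_nat (k+1))). lia. }
  set (H := fun j => epsilon (inhabits 0) (fun x => T x /\ c x = j - 1)).
  assert (HS : forall j, 1 <= j -> T (H j) /\ c (H j) = j - 1).
  { intros j Hj. unfold H. apply epsilon_spec. apply ex. lia. }
  exists (fun k => if k <? 0 then f k else H k).
  split; [|split].
  - intros i Hi. zd; lia.
  - intros i Hi. zd; try lia. destruct (HS i) as [T1 C1]; auto. destruct (HS (i+1)) as [T2 C2]; [lia|].
    destruct (Z_lt_le_dec (H i) (H (i+1))); auto. exfalso. specialize (c_mono _ _ l). lia.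
  - intros x. split.
    + intros [j [Hj Hx]]. revert Hx. zd; [lia|]. intros <-. apply HS; auto.
    + intros Tx. exists (c x + 1). split; [specialize (c_nonneg x); lia|].
      zd; [specialize (c_nonneg x); lia|].
      destruct (HS (c x + 1)) as [T1 C1]; [specialize (c_nonneg x); lia|].
      destruct (Ztrichotomy_inf (H (c x + 1)) x) as [[Hl|He]|Hg]; auto.
      * specialize (c_strict _ _ Hl T1). lia.
      * assert (Hg2 : x < H (c x + 1)) by lia. specialize (c_strict _ _ Hg2 Tx). lia.
Qed.

Lemma inc_unique (h1 h2 : Z -> Z) :
  (forall i, 1 <= i -> h1 i < h1 (i+1)) -> (forall i, 1 <= i -> h2 i < h2 (i+1)) ->
  (forall x, (exists j, 1 <= j /\ h1 j = x) <-> (exists j, 1 <= j /\ h2 j = x)) ->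
  forall j, 1 <= j -> h1 j = h2 j.
Proof.
  intros M1 M2 Him j Hj.
  assert (M1' : forall i k, 1 <= i -> i < k -> h1 i < h1 k) by (intros; apply (inc_mono h1 1 k); [intros; apply M1; lia|lia|lia|lia]).
  assert (M2' : forall i k, 1 <= i -> i < k -> h2 i < h2 k) by (intros; apply (inc_mono h2 1 k); [intros; apply M2; lia|lia|lia|lia]).
  remember (Z.to_nat (j - 1)) as n. revert j Hj Heqn. induction n as [n IH] using lt_wf_ind. intros j Hj En.
  assert (IHj : forall k, 1 <= k < j -> h1 k = h2 k) by (intros k Hk; apply (IH (Z.to_nat (k - 1))); lia).
  destruct (proj1 (Him (h1 j)) (ex_intro _ j (conj Hj eq_refl))) as [j1 [Hj1 E1]].
  destruct (proj2 (Him (h2 j)) (ex_intro _ j (conj Hj eq_refl))) as [j2 [Hj2 E2]].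
  assert (h1 j >= h2 j).
  { destruct (Z_lt_le_dec j1 j).
    - exfalso. rewrite <- IHj in E1 by lia. specialize (M1' j1 j ltac:(lia) l). lia.
    - destruct (Z.eq_dec j1 j); [subst; lia|]. specialize (M2' j j1 ltac:(lia) ltac:(lia)). lia. }
  assert (h2 j >= h1 j).
  { destruct (Z_lt_le_dec j2 j).
    - exfalso. rewrite IHj in E2 by lia. specialize (M2' j2 j ltac:(lia) l). lia.
    - destruct (Z.eq_dec j2 j); [subst; lia|]. specialize (M1' j j2 ltac:(lia) ltac:(lia)). lia. }
  lia.
Qed.

Lemma natural_spec m f : in_plus m f -> is_natural m f (natural m f).
Proof. intros H. unfold natural. apply epsilon_spec. apply natural_exists; auto. Qed.

Lemma natural_unique m f h : in_plus m f -> is_natural m f h -> eqI m h (natural m f).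
Proof.
  intros Hf Hh. pose proof (natural_spec m f Hf) as Hn.
  destruct Hh as [A1 [B1 C1]]. destruct Hn as [A2 [B2 C2]].
  intros k [Hk|Hk].
  - rewrite A1, A2; auto.
  - apply inc_unique; auto. intros x. rewrite C1, C2. tauto.
Qed.

Lemma is_natural_eqI m f g h : eqI m f g -> is_natural m f h -> is_natural m g h.
Proof.
  intros E [A [B C]]. split; [|split]; auto.
  - intros i Hi. rewrite A by auto. apply E. left; auto.
  - intros x. rewrite C. split; intros H1 [j [Hj Hx]]; apply H1; exists j; split; auto;
      [rewrite E|rewrite <- E]; auto; right; auto.
Qed.


Definition crit m f g :=
  (forall x, ind (inA m f x) + ind (inS f x) = ind (inA m g x) + ind (inS g x)) /\
  (forall k, - Z.of_nat m <= k <= -1 -> g k <= f k).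

Lemma neg_dec m f : in_plus m f -> forall i j, - Z.of_nat m <= i -> i < j -> j <= -1 -> f i > f j.
Proof. intros [Hn _] i j Hi Hij Hj. apply (dec_mono f (- Z.of_nat m) (-1)); auto. Qed.

Lemma pos_dec m f : in_plus m f -> forall i j, 1 <= i -> i < j -> f i > f j.
Proof. intros [_ [Hp _]] i j Hi Hij. apply (dec_mono f 1 j); auto; lia. Qed.

Lemma cnt_split' P h lo n a : (a <= n)%nat -> cnt P h lo n = cnt P h lo a + cnt P h (lo + Z.of_nat a) (n - a).
Proof. intros. rewrite <- cnt_split. f_equal. lia. Qed.

Lemma NG_sorted m f k x : in_plus m f -> - Z.of_nat m <= k <= -1 ->
  (f k >= x -> NG m f x >= k + Z.of_nat m + 1) /\ (f k < x -> NG m f x <= k + Z.of_nat m).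
Proof.
  intros Hf Hk. pose proof (neg_dec m f Hf) as D. unfold NG. split; intros Hx.
  - rewrite (cnt_split' _ _ _ m (S (Z.to_nat (k + Z.of_nat m)))) by lia. rewrite cnt_all.
    + match goal with |- context [cnt ?P ?h ?lo ?n] => pose proof (cnt_bounds P h lo n) end. lia.
    + intros l Hl. unfold geb'. destruct (Z.leb_spec x (f l)); auto. exfalso.
      destruct (Z.eq_dec l k); [subst; lia|]. specialize (D l k ltac:(lia) ltac:(lia) ltac:(lia)). lia.
  - rewrite (cnt_split' _ _ _ m (Z.to_nat (k + Z.of_nat m))) by lia. rewrite (cnt_none _ _ (_ + _)).
    + match goal with |- context [cnt ?P ?h ?lo ?n] => pose proof (cnt_bounds P h lo n) end. lia.
    + intros l Hl. unfold geb'. destruct (Z.leb_spec x (f l)); auto. exfalso.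
      destruct (Z.eq_dec l k); [subst; lia|]. specialize (D k l ltac:(lia) ltac:(lia) ltac:(lia)). lia.
Qed.

Lemma crit2_of_NG m f g : in_plus m f -> in_plus m g -> (forall x, NG m g x <= NG m f x) ->
  forall k, - Z.of_nat m <= k <= -1 -> g k <= f k.
Proof.
  intros Hf Hg H k Hk. destruct (Z_le_gt_dec (g k) (f k)); auto. exfalso.
  destruct (NG_sorted m g k (g k) Hg Hk) as [A _]. destruct (NG_sorted m f k (g k) Hf Hk) as [_ B].
  specialize (A ltac:(lia)). specialize (B ltac:(lia)). specialize (H (g k)). lia.
Qed.

Lemma cnt_neg_ind m f x : in_plus m f -> cnt (eqb' x) f (- Z.of_nat m) m = ind (inA m f x).
Proof.
  intros Hf. apply cnt_eq_ind.
  - intros k l Hk Hl E. destruct (Z.lt_total k l) as [H|[H|H]]; auto; exfalso.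
    + specialize (neg_dec m f Hf k l ltac:(lia) H ltac:(lia)); lia.
    + specialize (neg_dec m f Hf l k ltac:(lia) H ltac:(lia)); lia.
  - unfold inA. split; intros [k [Hk E]]; exists k; split; auto; lia.
Qed.

Lemma cnt_pos_ind_f m f x : in_plus m f -> exists W0, forall W, (W0 <= W)%nat ->
  cnt (eqb' x) f 1 W = ind (inS f x).
Proof.
  intros Hf. destruct Hf as [A [B [N HN]]] eqn:Ef. exists (Z.to_nat (Z.max N (1 - x))). intros W HW.
  apply cnt_eq_ind.
  - intros k l Hk Hl E. destruct (Z.lt_total k l) as [H|[H|H]]; auto; exfalso.
    + specialize (pos_dec m f Hf k l ltac:(lia) H); lia.
    + specialize (pos_dec m f Hf l k ltac:(lia) H); lia.
  - split; intros [k [Hk E]]; exists k; split; auto; try lia.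
    destruct (Z_lt_le_dec k (1 + Z.of_nat W)); [lia|]. exfalso. rewrite HN in E by lia. lia.
Qed.

Lemma inc_lin (h : Z -> Z) : (forall i, 1 <= i -> h i < h (i+1)) -> forall j, 1 <= j -> h j >= h 1 + j - 1.
Proof.
  intros H j Hj. remember (Z.to_nat (j - 1)) as n. revert j Hj Heqn. induction n; intros j Hj En.
  - replace j with 1 by lia. lia.
  - specialize (IHn (j-1) ltac:(lia) ltac:(lia)). specialize (H (j-1) ltac:(lia)). replace (j-1+1) with j in H by lia. lia.
Qed.

Lemma cnt_pos_ind_h (h : Z -> Z) x : (forall i, 1 <= i -> h i < h (i+1)) -> exists W0, forall W, (W0 <= W)%nat ->
  cnt (eqb' x) h 1 W = ind (exists j, 1 <= j /\ h j = x).
Proof.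
  intros Hh. exists (Z.to_nat (x - h 1 + 1)). intros W HW. pose proof (inc_lin h Hh) as L.
  apply cnt_eq_ind.
  - intros k l Hk Hl E. destruct (Z.lt_total k l) as [H|[H|H]]; auto; exfalso.
    + specialize (inc_mono h 1 l ltac:(intros; apply Hh; lia) k l ltac:(lia) H ltac:(lia)); lia.
    + specialize (inc_mono h 1 k ltac:(intros; apply Hh; lia) l k ltac:(lia) H ltac:(lia)); lia.
  - split; intros [k [Hk E]]; exists k; split; auto; try lia.
    specialize (L k Hk). lia.
Qed.

Lemma crit_of_bruhat m f g : in_plus m f -> in_plus m g -> bruhat_le m g f -> crit m f g.
Proof.
  intros Hf Hg H. destruct (bruhat_inv m g f H) as [[W0 HT] HN]. split.
  - intros x. destruct (cnt_pos_ind_f m f x Hf) as [Wf Hwf]. destruct (cnt_pos_ind_f m g x Hg) as [Wg Hwg].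
    specialize (HT (Nat.max W0 (Nat.max Wf Wg)) ltac:(lia) x). unfold TC in HT.
    rewrite !cnt_neg_ind in HT by auto. rewrite Hwf, Hwg in HT by lia. lia.
  - apply crit2_of_NG; auto.
Qed.

Lemma crit_of_super m f g : in_plus m f -> in_plus m g -> super_ge m (natural m f) (natural m g) -> crit m f g.
Proof.
  intros Hf Hg H. destruct (super_inv m _ _ H) as [[W0 HT] HN].
  pose proof (natural_spec m f Hf) as [Af [Bf Cf]]. pose proof (natural_spec m g Hg) as [Ag [Bg Cg]].
  assert (Ef : forall P, cnt P (natural m f) (- Z.of_nat m) m = cnt P f (- Z.of_nat m) m)
    by (intros; apply cnt_ext; intros; apply Af; lia).
  assert (Eg : forall P, cnt P (natural m g) (- Z.of_nat m) m = cnt P g (- Z.of_nat m) m)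
    by (intros; apply cnt_ext; intros; apply Ag; lia).
  split.
  - intros x. destruct (cnt_pos_ind_h _ x Bf) as [Wf Hwf]. destruct (cnt_pos_ind_h _ x Bg) as [Wg Hwg].
    specialize (HT (Nat.max W0 (Nat.max Wf Wg)) ltac:(lia) x). unfold SC in HT.
    rewrite Ef, Eg, !cnt_neg_ind in HT by auto. rewrite Hwf, Hwg in HT by lia.
    assert (Cf' : (exists j, 1 <= j /\ natural m f j = x) <-> ~ inS f x) by apply Cf.
    assert (Cg' : (exists j, 1 <= j /\ natural m g j = x) <-> ~ inS g x) by apply Cg.
    rewrite (ind_iff _ _ Cf'), (ind_iff _ _ Cg') in HT.
    destruct (ind_01 (inS f x)) as [[E1 N1]|[E1 N1]]; destruct (ind_01 (inS g x)) as [[E2 N2]|[E2 N2]];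
      [rewrite (ind_t (~ inS f x)), (ind_t (~ inS g x)) in HT
      |rewrite (ind_t (~ inS f x)), (ind_f (~ inS g x)) in HT
      |rewrite (ind_f (~ inS f x)), (ind_t (~ inS g x)) in HT
      |rewrite (ind_f (~ inS f x)), (ind_f (~ inS g x)) in HT]; auto; lia.
  - apply crit2_of_NG; auto. intros x. specialize (HN x). unfold NG in *. rewrite Ef, Eg in HN. auto.
Qed.


Definition rotL (h : Z -> Z) s t : Z -> Z :=
  fun k => if k =? s then h t else if (s <? k) && (k <=? t) then h (k-1) else h k.
Definition rotR (h : Z -> Z) s t : Z -> Z :=
  fun k => if (s <=? k) && (k <? t) then h (k+1) else if k =? t then h s else h k.

Ltac zd2 := repeat (simpl; match goal with
 | |- context [Z.eqb ?a ?b] => destruct (Z.eqb_spec a b)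
 | |- context [Z.ltb ?a ?b] => destruct (Z.ltb_spec a b)
 | |- context [Z.leb ?a ?b] => destruct (Z.leb_spec a b)
 end); simpl.

Lemma chainL (R : (Z -> Z) -> (Z -> Z) -> Prop) (cmp : Z -> Z -> Prop) (ok : Z -> Prop) :
  (forall h k, ok k -> ok (k+1) -> cmp (h k) (h (k+1)) -> R h (act h k (k+1))) ->
  forall n h s t, t = s + Z.of_nat n -> (forall k, s <= k <= t -> ok k) ->
  (forall k, s <= k < t -> cmp (h k) (h t)) -> clos_refl_trans _ R h (rotL h s t).
Proof.
  intros HR n. induction n; intros h s t Et Hok Hc.
  - replace (rotL h s t) with h; [apply rt_refl|]. apply functional_extensionality; intros k.
    unfold rotL. zd2; subst; auto; f_equal; lia.
  - set (h1 := act h (t-1) t).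
    assert (S1 : R h h1).
    { unfold h1. replace t with (t - 1 + 1) at 2 by lia. apply HR; try (apply Hok; lia).
      replace (t-1+1) with t by lia. apply Hc; lia. }
    assert (E : rotL h1 s (t-1) = rotL h s t).
    { apply functional_extensionality; intros k. unfold rotL, h1, act, tau. zd2; subst; try (f_equal; lia); lia. }
    rewrite <- E. eapply rt_trans; [apply rt_step; exact S1|]. apply IHn; [lia|intros; apply Hok; lia|].
    intros k Hk. unfold h1, act, tau. zd2; try lia. apply Hc; lia.
Qed.

Lemma chainR (R : (Z -> Z) -> (Z -> Z) -> Prop) (cmp : Z -> Z -> Prop) (ok : Z -> Prop) :
  (forall h k, ok k -> ok (k+1) -> cmp (h k) (h (k+1)) -> R h (act h k (k+1))) ->
  forall n h s t, t = s + Z.of_nat n -> (forall k, s <= k <= t -> ok k) ->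
  (forall k, s < k <= t -> cmp (h s) (h k)) -> clos_refl_trans _ R h (rotR h s t).
Proof.
  intros HR n. induction n; intros h s t Et Hok Hc.
  - replace (rotR h s t) with h; [apply rt_refl|]. apply functional_extensionality; intros k.
    unfold rotR. zd2; subst; auto; f_equal; lia.
  - set (h1 := act h s (s+1)).
    assert (S1 : R h h1).
    { unfold h1. apply HR; try (apply Hok; lia). apply Hc; lia. }
    assert (E : rotR h1 (s+1) t = rotR h s t).
    { apply functional_extensionality; intros k. unfold rotR, h1, act, tau. zd2; subst; try (f_equal; lia); lia. }
    rewrite <- E. eapply rt_trans; [apply rt_step; exact S1|]. apply IHn; [lia|intros; apply Hok; lia|].
    intros k Hk. unfold h1, act, tau. zd2; try lia. apply Hc; lia.
Qed.

Lemma bruhat_adj m h k : inI m k -> inI m (k+1) -> h k < h (k+1) -> bruhat_step m h (act h k (k+1)).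
Proof. intros. exists k, (k+1). repeat split; auto; try lia; apply eqI_refl. Qed.

Lemma type2_adj m h k : (- Z.of_nat m <= k <= -1) -> (- Z.of_nat m <= k+1 <= -1) -> h k > h (k+1) ->
  super_down m h (act h k (k+1)).
Proof. intros. right; left. exists k, (k+1). refine (conj _ (conj _ (conj _ (conj _ _)))); unfold inI; try lia. apply eqI_refl. Qed.

Lemma type3_adj m h k : 1 <= k -> 1 <= k+1 -> h k < h (k+1) -> super_down m h (act h k (k+1)).
Proof. intros. right; right. exists k, (k+1). refine (conj _ (conj _ (conj _ (conj _ _)))); unfold inI; try lia. apply eqI_refl. Qed.

Definition upd2 (h : Z -> Z) P R v : Z -> Z := fun k => if k =? P then v else if k =? R then v else h k.

Lemma dec_chain m n (Z0 : Z -> Z) P R c : - Z.of_nat m <= P <= -1 -> 1 <= R -> Z0 P = c -> Z0 R = c ->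
  clos_refl_trans _ (super_down m) Z0 (upd2 Z0 P R (c - Z.of_nat n)).
Proof.
  intros HP HR E1 E2. induction n.
  - replace (upd2 Z0 P R (c - Z.of_nat 0)) with Z0; [apply rt_refl|].
    apply functional_extensionality; intros k. unfold upd2. zd2; subst; auto; lia.
  - eapply rt_trans; [exact IHn|]. apply rt_step. left. exists P, R.
    refine (conj _ (conj _ (conj _ (conj _ _)))); unfold inI; try lia.
    + unfold upd2. zd2; lia.
    + intros k _. rewrite d_neg, d_pos by lia. unfold upd2. zd2; lia.
Qed.

Lemma rotL_s h s t : rotL h s t s = h t.
Proof. unfold rotL. rewrite Z.eqb_refl. auto. Qed.
Lemma rotL_mid h s t k : s < k <= t -> rotL h s t k = h (k-1).
Proof. intros. unfold rotL. zd2; lia. Qed.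
Lemma rotL_out h s t k : s <= t -> k < s \/ t < k -> rotL h s t k = h k.
Proof. intros. unfold rotL. zd2; lia. Qed.
Lemma rotR_mid h s t k : s <= k < t -> rotR h s t k = h (k+1).
Proof. intros. unfold rotR. zd2; lia. Qed.
Lemma rotR_t h s t : s <= t -> rotR h s t t = h s.
Proof. intros. unfold rotR. zd2; lia. Qed.
Lemma rotR_out h s t k : s <= t -> k < s \/ t < k -> rotR h s t k = h k.
Proof. intros. unfold rotR. zd2; lia. Qed.
Lemma act_i h i j : act h i j i = h j.
Proof. unfold act, tau. rewrite Z.eqb_refl. auto. Qed.
Lemma act_j h i j : act h i j j = h i.
Proof. unfold act, tau. destruct (Z.eqb_spec j i); [subst; auto|]. rewrite Z.eqb_refl. auto. Qed.
Lemma act_o h i j k : k <> i -> k <> j -> act h i j k = h k.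
Proof. intros. unfold act, tau. zd2; lia. Qed.
Lemma upd2_P h P R v : upd2 h P R v P = v.
Proof. unfold upd2. rewrite Z.eqb_refl. auto. Qed.
Lemma upd2_R h P R v : upd2 h P R v R = v.
Proof. unfold upd2. destruct (Z.eqb_spec R P); auto. rewrite Z.eqb_refl. auto. Qed.
Lemma upd2_o h P R v k : k <> P -> k <> R -> upd2 h P R v k = h k.
Proof. intros. unfold upd2. zd2; lia. Qed.


Definition shape (h : Z -> Z) s t v1 u w v2 : Z -> Z := fun k =>
  if k <? s then h k else if k <? t then h (k+1) else if k =? t then v1
  else if k <? u then h k else if k =? u then v2 else if k <=? w then h (k-1) else h k.

Lemma shape_neg_dec m h s t v1 u w v2 : - Z.of_nat m <= s <= t -> t <= -1 -> 1 <= u ->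
  (forall i j, - Z.of_nat m <= i -> i < j -> j <= -1 -> h i > h j) ->
  (forall k, - Z.of_nat m <= k <= t -> k <> s -> h k > v1) ->
  (forall k, t < k <= -1 -> v1 > h k) ->
  forall i, - Z.of_nat m <= i < -1 -> shape h s t v1 u w v2 i > shape h s t v1 u w v2 (i+1).
Proof.
  intros Hs Ht Hu D V1 V2 i Hi. unfold shape. zd2; try lia;
  first [apply D; lia | apply V1; lia | apply V2; lia | lia].
Qed.

Lemma shape_pos_dec h s t v1 u w v2 : s <= t -> t < 1 -> 1 <= u <= w ->
  (forall i j, 1 <= i -> i < j -> h i > h j) ->
  (forall k, 1 <= k < u -> h k > v2) ->
  (forall k, u <= k -> v2 > h k) ->
  forall i, 1 <= i -> shape h s t v1 u w v2 i > shape h s t v1 u w v2 (i+1).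
Proof.
  intros Hst Ht Hu D V1 V2 i Hi. unfold shape. zd2; try lia;
  first [apply D; lia | apply V1; lia | apply V2; lia | lia].
Qed.

Lemma shape_pos_inc h s t v1 u w v2 : s <= t -> t < 1 -> 1 <= u <= w ->
  (forall i j, 1 <= i -> i < j -> h i < h j) ->
  (forall k, 1 <= k < u -> h k < v2) ->
  (forall k, u <= k -> v2 < h k) ->
  forall i, 1 <= i -> shape h s t v1 u w v2 i < shape h s t v1 u w v2 (i+1).
Proof.
  intros Hst Ht Hu D V1 V2 i Hi. unfold shape. zd2; try lia;
  first [apply D; lia | apply V1; lia | apply V2; lia | lia].
Qed.

Lemma shape_img_neg m h s t v1 u w v2 x : - Z.of_nat m <= s <= t -> t <= -1 -> 1 <= u ->
  (forall k l, - Z.of_nat m <= k <= -1 -> - Z.of_nat m <= l <= -1 -> h k = h l -> k = l) ->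
  (inA m (shape h s t v1 u w v2) x <-> (inA m h x /\ x <> h s) \/ x = v1).
Proof.
  intros Hs Ht Hu Inj. split.
  - intros [k [Hk E]]. revert E. unfold shape. zd2; try lia; intros E; subst x; try (right; reflexivity);
      left; (split; [eexists; split; [|reflexivity]; lia| intros E'; apply Inj in E'; lia]).
  - intros [[[k [Hk E]] Hne]|E].
    + assert (k <> s) by (intros ->; auto).
      destruct (Z_lt_le_dec k s).
      * exists k. split; [lia|]. unfold shape. zd2; lia.
      * destruct (Z_le_gt_dec k t).
        -- exists (k-1). split; [lia|]. unfold shape. zd2; try lia. subst; f_equal; lia.
        -- exists k. split; [lia|]. unfold shape. zd2; lia.
    + exists t. split; [lia|]. unfold shape. zd2; lia.
Qed.

Lemma shape_img_pos h s t v1 u w v2 x : s <= t -> t < 1 -> 1 <= u <= w ->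
  (forall k l, 1 <= k -> 1 <= l -> h k = h l -> k = l) ->
  (inS (shape h s t v1 u w v2) x <-> (inS h x /\ x <> h w) \/ x = v2).
Proof.
  intros Hst Ht Hu Inj. split.
  - intros [k [Hk E]]. revert E. unfold shape. zd2; try lia; intros E; subst x; try (right; reflexivity);
      left; (split; [eexists; split; [|reflexivity]; lia| intros E'; apply Inj in E'; lia]).
  - intros [[[k [Hk E]] Hne]|E].
    + assert (k <> w) by (intros ->; auto).
      destruct (Z_lt_le_dec k u).
      * exists k. split; [lia|]. unfold shape. zd2; lia.
      * destruct (Z_lt_le_dec k w).
        -- exists (k+1). split; [lia|]. unfold shape. zd2; try lia. subst; f_equal; lia.
        -- exists k. split; [lia|]. unfold shape. zd2; lia.
    + exists u. split; [lia|]. unfold shape. zd2; lia.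
Qed.

Lemma sh_lt h s t v1 u w v2 k : k < s -> shape h s t v1 u w v2 k = h k.
Proof. intros. unfold shape. zd2; lia. Qed.
Lemma sh_mid h s t v1 u w v2 k : s <= k < t -> shape h s t v1 u w v2 k = h (k+1).
Proof. intros. unfold shape. zd2; lia. Qed.
Lemma sh_t h s t v1 u w v2 : s <= t -> shape h s t v1 u w v2 t = v1.
Proof. intros. unfold shape. zd2; lia. Qed.
Lemma sh_tu h s t v1 u w v2 k : s <= t < k -> k < u -> shape h s t v1 u w v2 k = h k.
Proof. intros. unfold shape. zd2; lia. Qed.
Lemma sh_u h s t v1 u w v2 : s <= t < u -> shape h s t v1 u w v2 u = v2.
Proof. intros. unfold shape. zd2; lia. Qed.
Lemma sh_uw h s t v1 u w v2 k : s <= t < u -> u < k <= w -> shape h s t v1 u w v2 k = h (k-1).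
Proof. intros. unfold shape. zd2; lia. Qed.
Lemma sh_w h s t v1 u w v2 k : s <= t < u -> u <= w < k -> shape h s t v1 u w v2 k = h k.
Proof. intros. unfold shape. zd2; lia. Qed.


Lemma core_step m f g : in_plus m f -> in_plus m g -> crit m f g ->
  (exists k, - Z.of_nat m <= k <= -1 /\ f k <> g k) ->
  exists f', in_plus m f' /\ crit m f' g /\
    sumZ f' (- Z.of_nat m) m < sumZ f (- Z.of_nat m) m /\
    clos_refl_trans _ (bruhat_step m) f' f /\
    exists h', clos_refl_trans _ (super_down m) (natural m f) h' /\ is_natural m f' h'.
Proof.
  intros Hf Hg [C1 C2] [k0 [Hk0 Hne]].
  pose proof (neg_dec m f Hf) as Df. pose proof (neg_dec m g Hg) as Dg. pose proof (pos_dec m f Hf) as Pf.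
  destruct (Zmin_ex (fun k => f k <> g k) (- Z.of_nat m) k0) as [i0 [Hi0 [Hfi0 Hmin]]]; [lia|auto|].
  assert (Hlt : g i0 < f i0) by (specialize (C2 i0 ltac:(lia)); lia).
  assert (Hbelow : forall z, - Z.of_nat m <= z < i0 -> f z = g z).
  { intros z Hz. destruct (Z.eq_dec (f z) (g z)); auto. exfalso; eapply Hmin; eauto. }
  assert (nAga : ~ inA m g (f i0)).
  { intros [k [Hk E]]. destruct (Z.lt_total k i0) as [H|[H|H]].
    - rewrite <- Hbelow in E by lia. specialize (Df k i0 ltac:(lia) H ltac:(lia)). lia.
    - subst; lia.
    - specialize (Dg i0 k ltac:(lia) H ltac:(lia)). lia. }
  assert (nSfa : ~ inS f (f i0)).
  { intros HS. specialize (C1 (f i0)). rewrite (ind_t (inA m f (f i0))) in C1 by (exists i0; split; auto; lia).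
    rewrite (ind_t _ HS), (ind_f _ nAga) in C1. destruct (ind_01 (inS g (f i0))) as [[E _]|[E _]]; lia. }
  set (cov := fun x => exists k, - Z.of_nat m <= k <= -1 /\ g k < x <= f k).
  assert (ncov0 : ~ cov (Z.min (f i0 - 1) (g (-1)))).
  { intros [k [Hk [H1 H2]]]. destruct (Z.eq_dec k (-1)); [subst; lia|].
    specialize (Dg k (-1) ltac:(lia) ltac:(lia) ltac:(lia)). lia. }
  destruct (Zmax_ex (fun x => ~ cov x) (f i0 - 1) (Z.min (f i0 - 1) (g (-1)))) as [b [Hb [ncovb Hbmax]]]; [lia|auto|].
  assert (covI : forall z, b < z <= f i0 -> cov z).
  { intros z Hz. destruct (Z.eq_dec z (f i0)).
    - exists i0. split; [lia|]. lia.
    - apply NNPP. apply Hbmax. lia. }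
  destruct (covI (b+1) ltac:(lia)) as [kb [Hkb [Hkb1 Hkb2]]].
  assert (gkb : g kb = b).
  { destruct (Z.eq_dec (g kb) b); auto. exfalso. apply ncovb. exists kb. split; auto. lia. }
  assert (nAfb : ~ inA m f b).
  { intros [j [Hj E]]. assert (g j >= b).
    { destruct (Z_lt_ge_dec (g j) b); auto. exfalso. apply ncovb. exists j. split; auto. lia. }
    specialize (C2 j Hj). assert (g j = g kb) by lia.
    destruct (Z.lt_total j kb) as [H'|[H'|H']].
    - specialize (Dg j kb ltac:(lia) H' ltac:(lia)); lia.
    - subst; lia.
    - specialize (Dg kb j ltac:(lia) H' ltac:(lia)); lia. }
  assert (Sfb : inS f b).
  { specialize (C1 b). rewrite (ind_f _ nAfb), (ind_t (inA m g b)) in C1 by (exists kb; auto).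
    destruct (ind_01 (inS f b)) as [[E _]|[_ H]]; auto. destruct (ind_01 (inS g b)) as [[E' _]|[E' _]]; lia. }
  destruct Sfb as [q [Hq Efq]].
  assert (blta : b < f i0) by lia.
  destruct (Zmax_ex (fun k => f k > b) (-1) i0) as [P [HP [HfP HPmax]]]; [lia|simpl; lia|].
  assert (belowP : forall z, P < z <= -1 -> f z < b).
  { intros z Hz. specialize (HPmax z Hz). destruct (Z.eq_dec (f z) b).
    - exfalso; apply nAfb; exists z; split; auto; lia.
    - lia. }
  assert (aboveP : forall z, - Z.of_nat m <= z <= P -> f z > b).
  { intros z Hz. destruct (Z.eq_dec z P); [subst; auto|]. specialize (Df z P ltac:(lia) ltac:(lia) ltac:(lia)). lia. }
  destruct (Zmin_ex (fun j => f j < f i0) 1 q) as [Q [HQ [HfQ HQmin]]]; [lia|simpl; lia|].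
  assert (aboveQ : forall z, 1 <= z < Q -> f z > f i0).
  { intros z Hz. specialize (HQmin z Hz). destruct (Z.eq_dec (f z) (f i0)).
    - exfalso; apply nSfa; exists z; split; auto; lia.
    - lia. }
  assert (belowQ : forall z, Q <= z -> f i0 > f z).
  { intros z Hz. destruct (Z.eq_dec z Q); [subst; lia|]. specialize (Pf Q z ltac:(lia) ltac:(lia)). lia. }
  set (f' := shape f i0 P b Q q (f i0)).
  assert (injf : forall k l, - Z.of_nat m <= k <= -1 -> - Z.of_nat m <= l <= -1 -> f k = f l -> k = l).
  { intros k l Hk Hl E. destruct (Z.lt_total k l) as [H|[H|H]]; auto; exfalso.
    - specialize (Df k l ltac:(lia) H ltac:(lia)); lia.
    - specialize (Df l k ltac:(lia) H ltac:(lia)); lia. }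
  assert (injfp : forall k l, 1 <= k -> 1 <= l -> f k = f l -> k = l).
  { intros k l Hk Hl E. destruct (Z.lt_total k l) as [H|[H|H]]; auto; exfalso.
    - specialize (Pf k l ltac:(lia) H); lia.
    - specialize (Pf l k ltac:(lia) H); lia. }
  assert (Hf' : in_plus m f').
  { split; [|split].
    - intros i Hi. apply (shape_neg_dec m f i0 P b Q q (f i0)); [lia|lia|lia|exact Df| |  |lia].
      + intros k Hk Hk'. apply aboveP. lia.
      + intros k Hk. specialize (belowP k Hk). lia.
    - intros i Hi. apply (shape_pos_dec f i0 P b Q q (f i0)); [lia|lia|lia|exact Pf|exact aboveQ|exact belowQ|lia].
    - destruct Hf as [_ [_ [N HN]]]. exists (Z.max N (q+1)). intros i Hi. unfold f', shape. zd2; try lia. apply HN; lia. }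
  assert (IA : forall x, inA m f' x <-> (inA m f x /\ x <> f i0) \/ x = b).
  { intros x. unfold f'. apply (shape_img_neg m); auto; lia. }
  assert (IS : forall x, inS f' x <-> (inS f x /\ x <> b) \/ x = f i0).
  { intros x. unfold f'. rewrite <- Efq. apply shape_img_pos; auto; lia. }
  assert (Crit' : crit m f' g).
  { split.
    - intros x. rewrite <- C1. rewrite (ind_iff _ _ (IA x)), (ind_iff _ _ (IS x)).
      destruct (Z.eq_dec x (f i0)) as [->|Hxa].
      + rewrite (ind_f ((inA m f (f i0) /\ f i0 <> f i0) \/ f i0 = b)) by lia.
        rewrite (ind_t ((inS f (f i0) /\ f i0 <> b) \/ f i0 = f i0)) by auto.
        rewrite (ind_t (inA m f (f i0))) by (exists i0; split; auto; lia). rewrite (ind_f _ nSfa). lia.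
      + destruct (Z.eq_dec x b) as [->|Hxb].
        * rewrite (ind_t ((inA m f b /\ b <> f i0) \/ b = b)) by auto.
          rewrite (ind_f ((inS f b /\ b <> b) \/ b = f i0)) by lia.
          rewrite (ind_f _ nAfb), (ind_t (inS f b)) by (exists q; auto). lia.
        * rewrite (ind_iff ((inA m f x /\ x <> f i0) \/ x = b) (inA m f x)) by (split; [intros [[? ?]|?]; auto; lia|auto]).
          rewrite (ind_iff ((inS f x /\ x <> b) \/ x = f i0) (inS f x)) by (split; [intros [[? ?]|?]; auto; lia|auto]). lia.
    - intros k Hk. unfold f'.
      destruct (Z_lt_le_dec k i0).
      + rewrite sh_lt by lia. rewrite <- Hbelow by lia. lia.
      + destruct (Z_lt_le_dec k P).
        * rewrite sh_mid by lia.
        destruct (Z_le_gt_dec (g k) (f (k+1))) as [|Hgt]; auto. exfalso.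
        assert (F1 : f (k+1) > b) by (apply aboveP; lia).
        assert (F2 : f i0 > f (k+1)) by (apply Df; lia).
        destruct (covI (f (k+1) + 1) ltac:(lia)) as [j [Hj [G1 G2]]].
        destruct (Z_le_gt_dec j k).
        -- assert (g j >= g k) by (destruct (Z.eq_dec j k); [subst; lia|specialize (Dg j k ltac:(lia) ltac:(lia) ltac:(lia)); lia]). lia.
        -- assert (f (k+1) >= f j) by (destruct (Z.eq_dec j (k+1)); [subst; lia|specialize (Df (k+1) j ltac:(lia) ltac:(lia) ltac:(lia)); lia]). lia.
        * destruct (Z.eq_dec k P).
        -- subst k. rewrite sh_t by lia. destruct (Z_le_gt_dec (g P) b) as [|Hgt]; auto. exfalso.
        destruct (covI (b + 1) ltac:(lia)) as [j [Hj [G1 G2]]].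
        destruct (Z_le_gt_dec j P).
        ++ assert (g j >= g P) by (destruct (Z.eq_dec j P); [subst; lia|specialize (Dg j P ltac:(lia) ltac:(lia) ltac:(lia)); lia]). lia.
        ++ specialize (belowP j ltac:(lia)). lia.
        -- rewrite sh_tu by lia.
           apply C2; lia. }
  assert (Sum : sumZ f' (- Z.of_nat m) m < sumZ f (- Z.of_nat m) m).
  { apply sum_le_lt.
    - intros k Hk. unfold f'.
      destruct (Z_lt_le_dec k i0); [rewrite sh_lt by lia; lia|].
      destruct (Z_lt_le_dec k P); [rewrite sh_mid by lia; specialize (Df k (k+1) ltac:(lia) ltac:(lia) ltac:(lia)); lia|].
      destruct (Z.eq_dec k P); [subst; rewrite sh_t by lia; lia|].
      rewrite sh_tu by lia; lia.
    - exists i0. split; [lia|]. unfold f'.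
      destruct (Z.eq_dec i0 P); [subst; rewrite sh_t by lia; lia|].
      rewrite sh_mid by lia. specialize (Df i0 (i0+1) ltac:(lia) ltac:(lia) ltac:(lia)). lia. }
  assert (Ebru : clos_refl_trans _ (bruhat_step m) f' f).
  { set (Y := act f' P Q).
    assert (fP : f' P = b) by (unfold f'; apply sh_t; lia).
    assert (fQ : f' Q = f i0) by (unfold f'; apply sh_u; lia).
    assert (YP : Y P = f i0) by (unfold Y; rewrite act_i; auto).
    assert (YQ : Y Q = b) by (unfold Y; rewrite act_j; auto).
    assert (Yo : forall k, k <> P -> k <> Q -> Y k = f' k) by (intros; unfold Y; apply act_o; auto).
    assert (St1 : bruhat_step m f' Y).
    { exists P, Q. refine (conj _ (conj _ (conj _ (conj _ _)))); unfold inI; try lia. apply eqI_refl. }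
    assert (Ch1 : clos_refl_trans _ (bruhat_step m) Y (rotL Y i0 P)).
    { apply (chainL _ (fun x y => x < y) (fun k => - Z.of_nat m <= k <= -1)) with (n := Z.to_nat (P - i0)).
      - intros h k Hk Hk1 Hc. apply bruhat_adj; auto; unfold inI; lia.
      - lia.
      - intros; lia.
      - intros k Hk. rewrite YP, Yo by lia. unfold f'. rewrite sh_mid by lia.
        specialize (Df i0 (k+1) ltac:(lia) ltac:(lia) ltac:(lia)). lia. }
    assert (Ch2 : clos_refl_trans _ (bruhat_step m) (rotL Y i0 P) (rotR (rotL Y i0 P) Q q)).
    { apply (chainR _ (fun x y => x < y) (fun k => 1 <= k)) with (n := Z.to_nat (q - Q)).
      - intros h k Hk Hk1 Hc. apply bruhat_adj; auto; unfold inI; lia.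
      - lia.
      - intros; lia.
      - intros k Hk. rewrite !rotL_out by lia. rewrite YQ, Yo by lia. unfold f'. rewrite sh_uw by lia.
        destruct (Z.eq_dec (k-1) q); [lia|]. specialize (Pf (k-1) q ltac:(lia) ltac:(lia)). lia. }
    assert (E : rotR (rotL Y i0 P) Q q = f).
    { apply functional_extensionality; intros k.
      destruct (Z_lt_le_dec k i0).
      { rewrite rotR_out, rotL_out, Yo by lia. unfold f'. rewrite sh_lt by lia. auto. }
      destruct (Z.eq_dec k i0).
      { subst. rewrite rotR_out by lia. rewrite rotL_s. auto. }
      destruct (Z_le_gt_dec k P).
      { rewrite rotR_out, rotL_mid, Yo by lia. unfold f'. rewrite sh_mid by lia. f_equal; lia. }
      destruct (Z_lt_le_dec k Q).
      { rewrite rotR_out, rotL_out, Yo by lia. unfold f'. rewrite sh_tu by lia. auto. }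
      destruct (Z_lt_le_dec k q).
      { rewrite rotR_mid, rotL_out, Yo by lia. unfold f'. rewrite sh_uw by lia. f_equal; lia. }
      destruct (Z.eq_dec k q).
      { subst. rewrite rotR_t, rotL_out by lia. rewrite YQ. auto. }
      rewrite rotR_out, rotL_out, Yo by lia. unfold f'. rewrite sh_w by lia. auto. }
    rewrite <- E. eapply rt_trans; [apply rt_step; exact St1|]. eapply rt_trans; [exact Ch1|exact Ch2]. }
  exists f'. refine (conj Hf' (conj Crit' (conj Sum (conj Ebru _)))).
  pose proof (natural_spec m f Hf) as [Af [Bf Cf]]. set (hf := natural m f) in *.
  destruct (proj2 (Cf (f i0)) nSfa) as [r [Hr Ehr]].
  assert (nTb : forall j, 1 <= j -> hf j <> b).
  { intros j Hj E. apply (proj1 (Cf b)); [exists j; auto|exists q; auto]. }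
  assert (incM : forall i j, 1 <= i -> i < j -> hf i < hf j).
  { intros i j Hi Hij. apply (inc_mono hf 1 j); auto; lia. }
  destruct (Zmin_ex (fun j => hf j > b) 1 r) as [R [HR [HhR HRmin]]]; [lia|simpl; lia|].
  assert (belowR : forall z, 1 <= z < R -> hf z < b).
  { intros z Hz. specialize (HRmin z Hz). specialize (nTb z ltac:(lia)). lia. }
  assert (aboveR : forall z, R <= z -> b < hf z).
  { intros z Hz. destruct (Z.eq_dec z R); [subst; lia|]. specialize (incM R z ltac:(lia) ltac:(lia)). lia. }
  set (Z1 := rotR hf i0 P).
  assert (Ch3 : clos_refl_trans _ (super_down m) hf Z1).
  { apply (chainR _ (fun x y => x > y) (fun k => - Z.of_nat m <= k <= -1)) with (n := Z.to_nat (P - i0)).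
    - intros h k Hk Hk1 Hc. apply type2_adj; auto.
    - lia.
    - intros; lia.
    - intros k Hk. rewrite !Af by lia. apply Df; lia. }
  set (Z2 := rotL Z1 R r).
  assert (Ch4 : clos_refl_trans _ (super_down m) Z1 Z2).
  { apply (chainL _ (fun x y => x < y) (fun k => 1 <= k)) with (n := Z.to_nat (r - R)).
    - intros h k Hk Hk1 Hc. apply type3_adj; auto; lia.
    - lia.
    - intros; lia.
    - intros k Hk. unfold Z1. rewrite !rotR_out by lia. apply incM; lia. }
  assert (Z2P : Z2 P = f i0).
  { unfold Z2, Z1. rewrite rotL_out by lia. rewrite rotR_t by lia. apply Af; lia. }
  assert (Z2R : Z2 R = f i0).
  { unfold Z2, Z1. rewrite rotL_s. rewrite rotR_out by lia. auto. }
  pose proof (dec_chain m (Z.to_nat (f i0 - b)) Z2 P R (f i0) ltac:(lia) ltac:(lia) Z2P Z2R) as Ch5.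
  replace (f i0 - Z.of_nat (Z.to_nat (f i0 - b))) with b in Ch5 by lia.
  assert (Eh : upd2 Z2 P R b = shape hf i0 P b R r b).
  { apply functional_extensionality; intros k.
    destruct (Z.eq_dec k P). { subst. rewrite upd2_P, sh_t by lia. auto. }
    destruct (Z.eq_dec k R). { subst. rewrite upd2_R, sh_u by lia. auto. }
    rewrite upd2_o by auto. unfold Z2, Z1.
    destruct (Z_lt_le_dec k i0).
    { rewrite rotL_out, rotR_out, sh_lt by lia. auto. }
    destruct (Z_lt_le_dec k P).
    { rewrite rotL_out, rotR_mid, sh_mid by lia. auto. }
    destruct (Z_lt_le_dec k R).
    { rewrite rotL_out, rotR_out, sh_tu by lia. auto. }
    destruct (Z_le_gt_dec k r).
    { rewrite rotL_mid, rotR_out, sh_uw by lia. auto. }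
    rewrite rotL_out, rotR_out, sh_w by lia. auto. }
  exists (upd2 Z2 P R b). split.
  { eapply rt_trans; [exact Ch3|]. eapply rt_trans; [exact Ch4|exact Ch5]. }
  rewrite Eh. split; [|split].
  - intros i Hi. unfold f'. destruct (Z_lt_le_dec i i0).
    { rewrite !sh_lt by lia. apply Af; lia. }
    destruct (Z_lt_le_dec i P).
    { rewrite !sh_mid by lia. apply Af; lia. }
    destruct (Z.eq_dec i P). { subst. rewrite !sh_t by lia. auto. }
    rewrite !sh_tu by lia. apply Af; lia.
  - intros i Hi. apply (shape_pos_inc hf i0 P b R r b); [lia|lia|lia|exact incM|exact belowR|exact aboveR|lia].
  - intros x. change (inS (shape hf i0 P b R r b) x <-> ~ inS f' x).
    rewrite (shape_img_pos hf i0 P b R r b x); [|lia|lia|lia|].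
    2: { intros k l Hk Hl E. destruct (Z.lt_total k l) as [H|[H|H]]; auto; exfalso.
         - specialize (incM k l Hk H); lia.
         - specialize (incM l k Hl H); lia. }
    rewrite IS. rewrite Ehr.
    assert (CF : inS hf x <-> ~ inS f x) by apply Cf.
    rewrite CF.
    destruct (Z.eq_dec x b) as [->|Hxb].
    + split; [intros _|intros _; right; auto]. intros [[_ H]|H]; [auto|lia].
    + destruct (Z.eq_dec x (f i0)) as [->|Hxa].
      * split; [intros [[_ H]|H]; [auto|lia]|]. intros H; exfalso; apply H; right; auto.
      * split.
        -- intros [[H1 _]|H1]; [|lia]. intros [[H2 _]|H2]; auto.
        -- intros H. left. split; [intros H'; apply H; left; auto|auto].
Qed.


Lemma base_case m f g : in_plus m f -> in_plus m g -> crit m f g ->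
  (forall k, - Z.of_nat m <= k <= -1 -> f k = g k) -> eqI m f g.
Proof.
  intros Hf Hg [C1 C2] E.
  assert (EA : forall x, inA m f x <-> inA m g x).
  { intros x; split; intros [k [Hk Hx]]; exists k; split; auto; [rewrite <- E|rewrite E]; auto. }
  assert (ES : forall x, inS f x <-> inS g x).
  { intros x. specialize (C1 x). rewrite (ind_iff _ _ (EA x)) in C1.
    destruct (ind_01 (inS f x)) as [[A1 B1]|[A1 B1]]; destruct (ind_01 (inS g x)) as [[A2 B2]|[A2 B2]]; tauto || lia. }
  pose proof (pos_dec m f Hf) as Pf. pose proof (pos_dec m g Hg) as Pg.
  intros k [Hk|Hk]; [apply E; auto|].
  assert (- f k = - g k); [|lia].
  apply (inc_unique (fun j => - f j) (fun j => - g j)); auto.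
  - intros i Hi. specialize (Pf i (i+1) Hi ltac:(lia)). lia.
  - intros i Hi. specialize (Pg i (i+1) Hi ltac:(lia)). lia.
  - intros x. split; intros [j [Hj Hx]].
    + assert (I1 : inS f (- x)) by (exists j; split; auto; lia).
      destruct (proj1 (ES (- x)) I1) as [j' [Hj' Hx']]. exists j'. split; auto; lia.
    + assert (I1 : inS g (- x)) by (exists j; split; auto; lia).
      destruct (proj2 (ES (- x)) I1) as [j' [Hj' Hx']]. exists j'. split; auto; lia.
Qed.

Lemma core m g : in_plus m g -> forall n f, in_plus m f -> crit m f g ->
  sumZ f (- Z.of_nat m) m - sumZ g (- Z.of_nat m) m <= Z.of_nat n ->
  bruhat_le m g f /\ super_ge m (natural m f) (natural m g).
Proof.
  intros Hg n. induction n; intros f Hf C Hs.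
  all: destruct (classic (exists k, - Z.of_nat m <= k <= -1 /\ f k <> g k)) as [Hne|Heq].
  all: try (assert (EI : eqI m f g) by (apply base_case; auto; intros k Hk;
             destruct (Z.eq_dec (f k) (g k)); auto; exfalso; apply Heq; eauto);
        split; [left; apply eqI_sym; auto|right];
        apply eqI_sym; apply natural_unique; auto; apply (is_natural_eqI m g f); [apply eqI_sym; auto|];
        apply natural_spec; auto).
  - destruct (core_step m f g Hf Hg C Hne) as [f' [Hf' [C' [Sum _]]]].
    pose proof (sum_le g f' (- Z.of_nat m) m (fun k Hk => proj2 C' k ltac:(lia))). lia.
  - destruct (core_step m f g Hf Hg C Hne) as [f' [Hf' [C' [Sum [Br [h' [Sd Nh]]]]]]].
    pose proof (sum_le g f' (- Z.of_nat m) m (fun k Hk => proj2 C' k ltac:(lia))).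
    destruct (IHn f' Hf' C' ltac:(lia)) as [B S].
    split.
    + eapply bruhat_compose; eauto.
    + eapply super_compose; [exact Sd| |exact S]. apply natural_unique; auto.
Qed.

Theorem lemma6p6 (m : nat) (f g : Z -> Z) :
  in_plus m f -> in_plus m g ->
  (bruhat_le m g f <-> super_ge m (natural m f) (natural m g)).
Proof.
  intros Hf Hg.
  assert (K : crit m f g -> bruhat_le m g f /\ super_ge m (natural m f) (natural m g)).
  { intros C. apply (core m g Hg (Z.to_nat (sumZ f (- Z.of_nat m) m - sumZ g (- Z.of_nat m) m))); auto. lia. }
  split; intros H.
  - apply K. apply crit_of_bruhat; auto.
  - apply K. apply crit_of_super; auto.
Qed.
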